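(* Let $H$ be the 28-element set $H=\{n_M : n\in\mathbb{Z}_{12}\}\cup\{n_m : n\in\mathbb{Z}_{12}\}\cup\{n_{\mathrm{aug}} : n\in\{0,1,2,3\}\}$, and let $\mathcal{S}$ be the symmetric relation on $H$ consisting exactly of the pairs $(n_M,n_m)$, $(n_M,(n+4)_m)$, $(n_M,(n\bmod 4)_{\mathrm{aug}})$, $(n_m,n_M)$, $(n_m,(n+8)_M)$, $(n_m,((n+3)\bmod 4)_{\mathrm{aug}})$ for $n\in\mathbb{Z}_{12}$, together with the reverses of all these pairs. Then the monoid $M_{\mathcal{S}}$ of relations on $H$ generated by $\mathcal{S}$ under composition of relations has the presentation $M_{\mathcal{S}}=\langle \mathcal{S}\mid \mathcal{S}^7=\mathcal{S}^5\rangle$.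
   Context: Indices $n$ of $n_M,n_m$ are taken modulo 12; the elements of $H$ are formal labels (musically: $n_M=\{n,n+4,n+7\}$, $n_m=\{n,n+3,n+7\}$, $k_{\mathrm{aug}}=\{k,k+4,k+8\}$ in $\mathbb{Z}_{12}$; $\mathcal{S}$ is Douthett's relation $\mathcal{P}_{1,0}$ of moving one pitch class by a semitone). Composition of relations: $\mathcal{R}'\mathcal{R}$ is the set of pairs $(x,z)$ such that there exists $y$ with $(x,y)\in\mathcal{R}$ and $(y,z)\in\mathcal{R}'$; the monoid identity is the identity relation on $H$. *)

(* Defs.v *)
From mathcomp Require Import all_boot.
Set Implicit Arguments. Unset Strict Implicit. Unset Printing Implicit Defensive.

Definition H : finType := ('I_12 + 'I_12 + 'I_4)%type.

Definition maj (n : nat) : H := inl (inl (inord (n %% 12))).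
Definition mnr (n : nat) : H := inl (inr (inord (n %% 12))).
Definition aug (k : nat) : H := inr (inord (k %% 4)).

Definition relH := {set H * H}.

(* composition: relcomp R' R = R'R = {(x,z) | exists y, (x,y) in R, (y,z) in R'} *)
Definition relcomp (R' R : relH) : relH :=
  [set p | [exists y : H, ((p.1, y) \in R) && ((y, p.2) \in R')]].

Definition idrel : relH := [set p | p.1 == p.2].

Definition relpow (R : relH) (k : nat) : relH := iter k (relcomp R) idrel.

Definition sgen (n : nat) : seq (H * H) :=
  [:: (maj n, mnr n); (maj n, mnr (n + 4)); (maj n, aug n);
      (mnr n, maj n); (mnr n, maj (n + 8)); (mnr n, aug (n + 3))].

Definition S : relH :=
  [set p | [exists n : 'I_12, (p \in sgen n) || ((p.2, p.1) \in sgen n)]].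

(* The monoid congruence on the free monoid on one generator (nat, +)
   generated by the defining relation s^7 = s^5. *)
Inductive pres_cong : nat -> nat -> Prop :=
| pc_base : pres_cong 7 5
| pc_refl i : pres_cong i i
| pc_sym i j : pres_cong i j -> pres_cong j i
| pc_trans i j k : pres_cong i j -> pres_cong j k -> pres_cong i k
| pc_add i j k : pres_cong i j -> pres_cong (i + k) (j + k).

(* Main.v *)
Require Import Defs.
From mathcomp Require Import all_boot.
From mathcomp Require Import zify.
Definition cmaj n := n %% 12.
Definition cmnr n := 12 + n %% 12.
Definition caug n := 24 + n %% 4.
Definition sgn (n : nat) : seq (nat * nat) :=
  [:: (cmaj n, cmnr n); (cmaj n, cmnr (n + 4)); (cmaj n, caug n);
      (cmnr n, cmaj n); (cmnr n, cmaj (n + 8)); (cmnr n, caug (n + 3))].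
Definition inP (i j : nat) (s : seq (nat*nat)) := has (fun p => (i == p.1) && (j == p.2)) s.
Definition sbn i j := has (fun n => inP i j (sgn n) || inP j i (sgn n)) (iota 0 12).
Definition entry (M : seq (seq bool)) i j := nth false (nth [::] M i) j.
Definition M0 := mkseq (fun i => mkseq (fun j => eqn i j) 28) 28.
Definition SM := mkseq (fun i => mkseq (fun j => sbn i j) 28) 28.
Definition stepW T M := mkseq (fun i => mkseq (fun k => has (fun j => entry M i j && entry T j k) (iota 0 28)) 28) 28.
Definition eqM A B := all (fun i => all (fun j => entry A i j == entry B i j) (iota 0 28)) (iota 0 28).
Definition chkW T := let L := traject (stepW T) M0 8 in
  eqM (nth [::] L 7) (nth [::] L 5) &&
  all (fun i => all (fun j => (j <= i) || ~~ eqM (nth [::] L i) (nth [::] L j)) (iota 0 7)) (iota 0 7).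
Lemma chk_ok : chkW SM. Proof. by vm_compute. Qed.

Definition codeH (x : H) : nat :=
  match x with inl (inl a) => nat_of_ord a | inl (inr a) => 12 + nat_of_ord a | inr a => 24 + nat_of_ord a end.
Definition decode (j : nat) : H :=
  if j < 12 then inl (inl (inord j)) else if j < 24 then inl (inr (inord (j - 12))) else inr (inord (j - 24)).

Lemma codeH_lt x : codeH x < 28.
Proof. case: x => [[a|a]|a] /=; have := ltn_ord a; lia. Qed.

Lemma codeH_inj : injective codeH.
Proof.
move=> [[a|a]|a] [[b|b]|b] /= h; have := ltn_ord a; have := ltn_ord b; try lia;
  move=> _ _; congr (_ _); try congr (_ _); apply: val_inj => /=; lia.
Qed.

Lemma decodeK {j} : j < 28 -> codeH (decode j) = j.
Proof.
move=> hj; rewrite /decode; case: ifP => h1 /=; first by rewrite inordK.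
case: ifP => h2 /=; rewrite inordK; lia.
Qed.

Lemma code_maj n : codeH (maj n) = cmaj n.
Proof. by rewrite /= inordK // ltn_mod. Qed.
Lemma code_mnr n : codeH (mnr n) = cmnr n.
Proof. by rewrite /= inordK // ltn_mod. Qed.
Lemma code_aug n : codeH (aug n) = caug n.
Proof. by rewrite /= inordK // ltn_mod. Qed.

Lemma eqH x y : (x == y) = (codeH x == codeH y).
Proof. by rewrite (inj_eq codeH_inj). Qed.

Lemma sgenP n x y : ((x, y) \in sgen n) = inP (codeH x) (codeH y) (sgn n).
Proof.
rewrite /sgen /sgn /inP /= !inE !xpair_eqE !eqH ?code_maj ?code_mnr ?code_aug.
by rewrite !orbA orbF.
Qed.

Lemma SP x y : ((x, y) \in S) = sbn (codeH x) (codeH y).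
Proof.
rewrite inE /sbn; apply/existsP/hasP => [[n h] | [n hn h]].
  by exists (val n); [rewrite mem_iota ltn_ord | rewrite -!sgenP].
have hn' : n < 12 by move: hn; rewrite mem_iota.
by exists (Ordinal hn'); rewrite !sgenP.
Qed.

Lemma memI n a : (a \in iota 0 n) = (a < n).
Proof. by rewrite mem_iota add0n. Qed.

Lemma entry_mk (f : nat -> nat -> bool) i j : i < 28 -> j < 28 ->
  entry (mkseq (fun i => mkseq (f i) 28) 28) i j = f i j.
Proof. by move=> hi hj; rewrite /entry !nth_mkseq. Qed.

Lemma inv k x y : ((x, y) \in relpow S k) = entry (iter k (stepW SM) M0) (codeH x) (codeH y).
Proof.
elim: k x y => [|k IH] x y.
  by rewrite /= inE /M0 entry_mk ?codeH_lt //= eqH.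
rewrite /relpow iterS -/(relpow S k) /relcomp inE /= /stepW entry_mk ?codeH_lt //.
apply/existsP/hasP => [[w /andP [h1 h2]] | [j hj /andP [h1 h2]]].
  exists (codeH w); first by rewrite memI codeH_lt.
  by rewrite -IH h1 /SM entry_mk ?codeH_lt // -SP.
have hj' : j < 28 by move: hj; rewrite memI.
exists (decode j); apply/andP; split; first by rewrite IH decodeK.
by rewrite SP decodeK // -(entry_mk (fun i j => sbn i j)) ?codeH_lt.
Qed.

Lemma eqMP i j : relpow S i = relpow S j <-> eqM (iter i (stepW SM) M0) (iter j (stepW SM) M0).
Proof.
split => [E | h].
  apply/allP => a; rewrite memI => ha; apply/allP => b; rewrite memI => hb.
  by rewrite -(decodeK ha) -(decodeK hb) -!inv E.
apply/setP => [[x y]]; rewrite !inv.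
have := allP h (codeH x); rewrite memI codeH_lt => /(_ isT) /allP.
by move=> /(_ (codeH y)); rewrite memI codeH_lt => /(_ isT) /eqP.
Qed.

Lemma eqM_sym A B : eqM A B = eqM B A.
Proof.
rewrite /eqM; apply/allP/allP => h i hi; apply/allP => j hj;
  by have /allP /(_ j hj) := h i hi; rewrite eq_sym.
Qed.

Lemma c75 : eqM (iter 7 (stepW SM) M0) (iter 5 (stepW SM) M0).
Proof. by vm_compute. Qed.

Lemma rel75 : relpow S 7 = relpow S 5.
Proof. exact/eqMP/c75. Qed.

Lemma cdist i j : i < 7 -> j < i -> ~~ eqM (iter i (stepW SM) M0) (iter j (stepW SM) M0).
Proof.
move=> hi hji.
case: i hi hji => [|[|[|[|[|[|[|i]]]]]]] hi hji; try (exfalso; by []);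
case: j hji => [|[|[|[|[|[|j]]]]]] hji; try (exfalso; by []); vm_compute; reflexivity.
Qed.

Lemma distinct a b : a < 7 -> b < 7 -> relpow S a = relpow S b -> a = b.
Proof.
move=> ha hb E; case: (ltngtP a b) => // hab; exfalso.
  by move/eqMP: E => E; move: (cdist _ _ hb hab); rewrite eqM_sym E.
by move/eqMP: E => E; move: (cdist _ _ ha hab); rewrite E.
Qed.

Lemma per i : 5 <= i -> relpow S i = relpow S (5 + (i - 5) %% 2).
Proof.
elim/ltn_ind: i => i IH hi.
case: (ltnP i 7) => h7.
  have -> : 5 + (i - 5) %% 2 = i by move: hi h7; case: i {IH} => // [[|[|[|[|[|[|[|i]]]]]]]].
  by [].
have -> : relpow S i = relpow S (i - 2).
  have e : i = (i - 7) + 7 by lia.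
  rewrite e /relpow iterD -/(relpow S 7) rel75 -iterD; congr (iter _ _ _); lia.
rewrite IH; [congr (relpow S _) | |]; lia.
Qed.

Definition P i j := i = j \/ (5 <= i /\ 5 <= j /\ i %% 2 = j %% 2).

Lemma canon i : exists a, a < 7 /\ P i a /\ relpow S i = relpow S a.
Proof.
case: (ltnP i 5) => h.
  by exists i; split; [lia | split; [left |]].
exists (5 + (i - 5) %% 2); split; first lia.
split; last exact: per.
rewrite /P; lia.
Qed.

Lemma relP i j : relpow S i = relpow S j <-> P i j.
Proof.
split.
  move=> E; have [a [ha [Pa Ea]]] := canon i; have [b [hb [Pb Eb]]] := canon j.
  have eab : a = b by apply: distinct => //; rewrite -Ea -Eb.
  move: Pa Pb; rewrite /P eab; lia.
case => [-> // | [hi [hj hij]]].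
by rewrite (per _ hi) (per _ hj); congr (relpow S _); lia.
Qed.

Lemma presP i j : pres_cong i j <-> P i j.
Proof.
split.
  elim => [| k | k l _ | k l m _ | k l m _]; rewrite /P; lia.
have Q : forall i, 5 <= i -> pres_cong i (5 + (i - 5) %% 2).
  elim/ltn_ind => k IH hk.
  case: (ltnP k 7) => h7.
    have -> : 5 + (k - 5) %% 2 = k by move: hk h7; case: k {IH} => // [[|[|[|[|[|[|[|k]]]]]]]].
    exact: pc_refl.
  have := pc_add (k - 7) pc_base.
  have -> : 7 + (k - 7) = k by lia.
  move=> h1; apply: (pc_trans h1).
  have -> : 5 + (k - 5) %% 2 = 5 + ((5 + (k - 7)) - 5) %% 2 by congr (_ + _); lia.
  apply: IH; lia.
case => [-> | [hi [hj hij]]]; first exact: pc_refl.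
apply: (pc_trans (Q i hi)); apply: pc_sym.
have -> : 5 + (i - 5) %% 2 = 5 + (j - 5) %% 2 by lia.
exact: Q.
Qed.

Theorem mainTheorem2 :
  forall i j : nat, relpow S i = relpow S j <-> pres_cong i j.
Proof. by move=> i j; rewrite relP presP. Qed.
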